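(* Let $q$ be an odd prime power and $m\geq 2$. For each $1\leq i\leq m$ there exists a coset leader $S_i$ modulo $q^m-1$ with $w_q(S_i)=(q-1)m-i$. Moreover, for $1\leq i\leq m-1$, if $M_i$ and $M_{i+1}$ denote the largest coset leaders modulo $q^m-1$ with $w_q(M_i)=(q-1)m-i$ and $w_q(M_{i+1})=(q-1)m-(i+1)$ respectively, then $M_i>M_{i+1}$.
   Context: For $0\leq s\leq q^m-2$ with $q$-adic expansion $s=\sum_{j=0}^{m-1}s_jq^j$ ($0\leq s_j\leq q-1$), the $q$-weight is $w_q(s)=\sum_{j=0}^{m-1}s_j$. The $q$-cyclotomic coset of $s$ modulo $q^m-1$ is $\{s,sq,sq^2,\ldots\}\bmod(q^m-1)$; its smallest element is its coset leader, and ''coset leader modulo $q^m-1$'' means an integer equal to the coset leader of its own coset. *)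

(* Defs.v *)
From mathcomp Require Import all_boot.
Set Implicit Arguments. Unset Strict Implicit. Unset Printing Implicit Defensive.

Definition wq (q m s : nat) : nat := \sum_(j < m) ((s %/ q ^ j) %% q).

Definition is_coset_leader (q m s : nat) : Prop :=
  s < q ^ m - 1 /\ forall j : nat, s <= (s * q ^ j) %% (q ^ m - 1).

Definition is_largest_leader_of_weight (q m w M : nat) : Prop :=
  [/\ is_coset_leader q m M, wq q m M = w &
      forall s, is_coset_leader q m s -> wq q m s = w -> s <= M].

Definition odd_prime_power (q : nat) : Prop :=
  exists p k : nat, [/\ prime p, odd p, 0 < k & q = p ^ k].

(* Main.v *)
Require Import Defs.
From mathcomp Require Import all_boot zify.

Definition dig (q p x : nat) := (x %/ q ^ p) %% q.
Definition rotq (q m j x : nat) := (x %% q ^ (m - j)) * q ^ j + x %/ q ^ (m - j).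

Lemma dig_lt q p x : 0 < q -> dig q p x < q.
Proof. by move=> hq; rewrite /dig ltn_pmod. Qed.

Lemma E q k x : 0 < q -> x %% q ^ k.+1 = x %% q ^ k + dig q k x * q ^ k.
Proof.
move=> hq; have P : 0 < q ^ k by rewrite expn_gt0 hq.
have hd := dig_lt q k x hq.
have hr : x %% q ^ k < q ^ k by rewrite ltn_pmod.
rewrite {1}(divn_eq x (q ^ k)) {1}(divn_eq (x %/ q ^ k) q) -/(dig q k x).
have -> : ((x %/ q ^ k %/ q) * q + dig q k x) * q ^ k + x %% q ^ k
   = (x %/ q ^ k %/ q) * q ^ k.+1 + (x %% q ^ k + dig q k x * q ^ k).
  by rewrite expnS; lia.
rewrite modnMDl modn_small // expnS; nia.
Qed.

Lemma DM x c M : x %% M + c < M -> (x + c) %% M = x %% M + c /\ (x + c) %/ M = x %/ M.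
Proof.
move=> h; have M0 : 0 < M by lia.
have hx := divn_eq x M; move: h hx.
set a := x %/ M; set r := x %% M => h ->.
rewrite -addnA modnMDl modn_small // divnMDl // divn_small //; lia.
Qed.

Lemma R q k K x : 0 < q -> dig q k x < q.-1 -> k < K -> x %% q ^ K + q ^ k < q ^ K.
Proof.
move=> hq hd /subnKC <-; elim: (K - k.+1) => [|t IH].
  rewrite addn0 E //; have P : 0 < q ^ k by rewrite expn_gt0 hq.
  have := ltn_pmod x P; rewrite expnS => h. nia.
rewrite addnS E // expnS.
have := dig_lt q (k.+1 + t) x hq. nia.
Qed.

Lemma F q b x : 0 < q -> (forall p, p < b -> dig q p x = q.-1) -> x %% q ^ b = (q ^ b).-1.
Proof.
move=> hq; elim: b => [|b IH] h; first by rewrite expn0 modn1.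
rewrite E // IH; last by move=> p hp; apply: h; lia.
rewrite h // expnS; have : 0 < q ^ b by rewrite expn_gt0 hq. nia.
Qed.

Lemma L_rot q m j x : 1 < q -> x < q ^ m - 1 -> j < m ->
  (x * q ^ j) %% (q ^ m - 1) = rotq q m j x.
Proof.
move=> hq hx hj; rewrite /rotq.
have e : q ^ m = q ^ j * q ^ (m - j) by rewrite -expnD subnKC // ltnW.
move: hx; rewrite e.
have P0 : 0 < q ^ j by rewrite expn_gt0; lia.
have Q0 : 0 < q ^ (m - j) by rewrite expn_gt0; lia.
set P := q ^ j; set Q := q ^ (m - j) => hx.
have hxe := divn_eq x Q.
have ha : x %/ Q < P by rewrite ltn_divLR //; lia.
have hb : x %% Q < Q by rewrite ltn_pmod.
move: hxe ha hb; set a := x %/ Q; set b := x %% Q => hxe ha hb.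
clearbody a b P Q; subst x.
have h1 : b * P <= (Q - 1) * P by rewrite leq_mul2r; lia.
have h2 : a * Q <= (P - 1) * Q by rewrite leq_mul2r; lia.
rewrite mulnBl mul1n in h1; rewrite mulnBl mul1n in h2.
have {}P0 : 0 < P by lia.
have {}Q0 : 0 < Q by lia.
have hQP : Q <= P * Q by rewrite leq_pmull.
have hPQ : P <= Q * P by rewrite leq_pmull.
have hc : Q * P = P * Q by rewrite mulnC.
have hlt : a + b * P < P * Q - 1.
  have : a + b * P <= P * Q - 1 by lia.
  rewrite leq_eqVlt => /orP [/eqP h|//].
  have hb' : (Q - 1) * P <= b * P by rewrite mulnBl mul1n; lia.
  rewrite leq_mul2r in hb'; move/orP: hb' => [|hb']; first lia.
  have hb2 : b = Q - 1 by lia.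
  have ha' : a = P - 1.
    subst b; rewrite mulnBl mul1n in h; lia.
  subst a b; move: hx; rewrite mulnBl mul1n; lia.
have -> : (a * Q + b) * P = a * (P * Q - 1) + (b * P + a).
  rewrite mulnBr muln1 mulnDl; have : a * Q * P = a * (P * Q) by rewrite -mulnA (mulnC Q).
  have : a <= a * (P * Q) by rewrite leq_pmulr // muln_gt0 P0 Q0.
  lia.
by rewrite modnMDl modn_small // addnC.
Qed.

Lemma L_per q m j x : 1 < q -> 1 < m ->
  (x * q ^ j) %% (q ^ m - 1) = (x * q ^ (j %% m)) %% (q ^ m - 1).
Proof.
move=> hq hm.
have qm : 3 <= q ^ m.
  have : q ^ 2 <= q ^ m by rewrite leq_exp2l.
  have : 2 * 2 <= q * q by rewrite leq_mul.
  rewrite expnS expn1; lia.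
have qmod : q ^ m %% (q ^ m - 1) = 1.
  have e : q ^ m = (q ^ m - 1) + 1 by lia.
  rewrite {1}e modnDl modn_small //; lia.
have tm : (q ^ m) ^ (j %/ m) %% (q ^ m - 1) = 1.
  by rewrite -modnXm qmod exp1n modn_small //; lia.
rewrite {1}(divn_eq j m) (mulnC (j %/ m) m) expnD expnM mulnCA -modnMml tm mul1n.
by [].
Qed.

Lemma leaderP q m x : 1 < q -> 1 < m -> x < q ^ m - 1 ->
  (forall j, j < m -> x <= rotq q m j x) -> is_coset_leader q m x.
Proof.
move=> hq hm hx h; split => // j.
rewrite L_per // L_rot //; first by apply: h; rewrite ltn_pmod //; lia.
rewrite ltn_pmod //; lia.
Qed.

Lemma leader_rot q m x j : 1 < q -> is_coset_leader q m x -> j < m -> x <= rotq q m j x.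
Proof. by move=> hq [hx h] hj; rewrite -L_rot. Qed.

Lemma D q k p x : 1 < q -> dig q k x < q.-1 ->
  dig q p (x + q ^ k) = dig q p x + (p == k).
Proof.
move=> hq hd.
have hR := R q k p x (ltnW hq) hd.
move: hd; rewrite /dig => hd.
have Pp : 0 < q ^ p by rewrite expn_gt0; lia.
case: (ltngtP p k) => hpk.
- have -> : q ^ k = q ^ (k - p).-1 * q * q ^ p.
    by rewrite -expnSr -expnD prednK ?subnK //; lia.
  rewrite addnC divnMDl // modnMDl addn0 //.
- have [_ ->] := DM _ _ _ (hR hpk).
  by rewrite addn0.
- subst.
  rewrite (addnC x) -{1}(mul1n (q ^ k)) divnMDl // -modnDmr modn_small; lia.
Qed.

Lemma T q m k s : 1 < q -> 1 < m -> is_coset_leader q m s -> k < m ->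
  dig q k s < q.-1 -> s < (q - 1) * q ^ (m - 1).
Proof.
move=> hq hm hl hk hd.
have := leader_rot q m s (m - 1 - k) hq hl (ltac:(lia)).
rewrite /rotq (_ : m - (m - 1 - k) = k.+1); last by lia.
rewrite E; last by lia.
have e1 : q ^ (m - 1) = q ^ k * q ^ (m - 1 - k) by rewrite -expnD; congr (_ ^ _); lia.
have e2 : q ^ m = q ^ k.+1 * q ^ (m - 1 - k) by rewrite -expnD; congr (_ ^ _); lia.
have P0 : 0 < q ^ k by rewrite expn_gt0; lia.
have J0 : 0 < q ^ k.+1 by rewrite expn_gt0; lia.
have ht : s %/ q ^ k.+1 < q ^ (m - 1 - k).
  rewrite ltn_divLR // mulnC -e2; case: hl; lia.
have hr : s %% q ^ k < q ^ k by rewrite ltn_pmod.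
rewrite e1.
move: ht hr hd; set t := s %/ q ^ k.+1; set r := s %% q ^ k; set d := dig q k s.
set P := q ^ k; set J := q ^ (m - 1 - k) => ht hr hd.
clearbody t r d P J.
have h1 : d * P <= (q - 2) * P by rewrite leq_mul2r; lia.
rewrite mulnBl in h1.
have h2 : (r + d * P) * J <= ((q - 1) * P - 1) * J.
  rewrite leq_mul2r; apply/orP; right; rewrite mulnBl.
  have : 2 * P <= q * P by rewrite leq_mul2r; lia.
  lia.
rewrite mulnBl mul1n in h2.
rewrite mulnA.
have : J <= (q - 1) * P * J by rewrite leq_pmull // muln_gt0; apply/andP; split; lia.
lia.
Qed.

Lemma incr_core q m s k : 1 < q -> 1 < m -> is_coset_leader q m s -> k < m ->
  dig q k s < q.-1 -> (forall p, p < k -> dig q p s = q.-1) ->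
  dig q (m - 1) (s + q ^ k) < q.-1 -> is_coset_leader q m (s + q ^ k).
Proof.
move=> hq hm hl hk hd hlow htop.
have hD := D q k _ s hq hd.
have em : q ^ m = q * q ^ (m - 1) by rewrite -expnS; congr (_ ^ _); lia.
have M0 : 0 < q ^ (m - 1) by rewrite expn_gt0; lia.
have hsm : s < q ^ m by case: hl; lia.
have hs' : s + q ^ k < q ^ m.
  have := R q k m s (ltnW hq) hd hk; rewrite modn_small //.
have hs2 : s + q ^ k < (q - 1) * q ^ (m - 1).
  rewrite -ltn_divLR //; move: htop; rewrite /dig modn_small //.
  lia.
  by rewrite ltn_divLR // -em.
have hs3 : s + q ^ k < q ^ m - 1.
  move: hs2; rewrite mulnBl mul1n -em; lia.
apply: leaderP => // j hj.
case: (ltnP (k + j) m) => hkj.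
- have [e1 e2] := DM _ _ _ (R q k (m - j) s (ltnW hq) hd (ltac:(lia))).
  have := leader_rot q m s j hq hl hj.
  rewrite /rotq e1 e2 mulnDl.
  have : q ^ k <= q ^ k * q ^ j by rewrite leq_pmulr // expn_gt0; lia.
  lia.
- have hF : (s + q ^ k) %% q ^ (m - j) = (q ^ (m - j)).-1.
    apply: F; first lia.
    move=> p hp; rewrite hD hlow; last lia.
    have -> : (p == k) = false by apply/eqP; lia.
    by rewrite addn0.
  rewrite /rotq hF.
  have ej : q ^ m = q ^ (m - j) * q ^ j by rewrite -expnD; congr (_ ^ _); lia.
  have hj1 : q ^ j <= q ^ (m - 1) by rewrite leq_pexp2l //; lia.
  have Q0 : 0 < q ^ (m - j) by rewrite expn_gt0; lia.
  have : (q ^ (m - j)).-1 * q ^ j = q ^ m - q ^ j.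
    by rewrite ej -subn1 mulnBl mul1n.
  move: hs2; rewrite mulnBl mul1n -em.
  have : q ^ (m - 1) <= q ^ m by rewrite em leq_pmull //; lia.
  move: ((s + q ^ k) %/ q ^ (m - j)) => z; clear ej hF; lia.
Qed.

Lemma sum_ind n k : k < n -> \sum_(j < n) ((j : nat) == k) = 1.
Proof.
move=> hk; rewrite (bigD1 (Ordinal hk)) //= eqxx big1 // => j.
by rewrite -val_eqE /= => /negbTE ->.
Qed.

Lemma incr q m s : 1 < q -> 1 < m -> is_coset_leader q m s ->
  wq q m s + 2 <= (q - 1) * m ->
  exists s', [/\ is_coset_leader q m s', wq q m s' = wq q m s + 1 & s < s'].
Proof.
move=> hq hm hl hw.
have hex : exists p, (p < m) && (dig q p s < q.-1).
  case: (boolP [exists p : 'I_m, dig q p s < q.-1]) => [/existsP [p hp]| /existsPn hn].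
    by exists p; rewrite ltn_ord hp.
  exfalso; move: hw; rewrite /wq (eq_bigr (fun _ => q.-1)).
    by rewrite sum_nat_const card_ord; lia.
  move=> i _; have := hn i; have := dig_lt q i s (ltnW hq); rewrite /dig; lia.
case: (ex_minnP hex) => k /andP [hk hd] hmin.
have hlow : forall p, p < k -> dig q p s = q.-1.
  move=> p hp; have := dig_lt q p s (ltnW hq).
  case: (ltnP (dig q p s) q.-1) => h; last lia.
  have := hmin p; rewrite h andbT; have -> : p < m by lia.
  move=> /(_ isT); lia.
have hD := D q k _ s hq hd.
exists (s + q ^ k); split.
- apply: incr_core => //.
  rewrite hD.
  case: (eqVneq (m - 1) k) => e.
  + rewrite addn1.
    have [m' em] : exists m', m = m'.+1 by exists m.-1; lia.
    move: hw; subst m; rewrite subn1 /= in e; subst k; rewrite subn1.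
    rewrite /wq big_ord_recr /= (eq_bigr (fun _ => q.-1)).
      rewrite sum_nat_const card_ord -/(dig q m' s) subn1 /= mulnSr (mulnC q.-1); lia.
    by move=> i _; apply: hlow.
  + rewrite /= addn0.
    have := T q m k s hq hm hl hk hd.
    rewrite /dig -ltn_divLR; last by rewrite expn_gt0; lia.
    have := leq_mod (s %/ q ^ (m - 1)) q; lia.
- rewrite /wq (eq_bigr (fun j : 'I_m => dig q j s + ((j : nat) == k))); last by move=> j _; apply: hD.
  by rewrite big_split /= sum_ind.
- have : 0 < q ^ k by rewrite expn_gt0; lia.
  lia.
Qed.

Theorem lemma17 (q m : nat) :
  odd_prime_power q -> 2 <= m ->
  (forall i, 1 <= i <= m ->
     exists S, is_coset_leader q m S /\ wq q m S = (q - 1) * m - i) /\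
  (forall i M1 M2, 1 <= i <= m - 1 ->
     is_largest_leader_of_weight q m ((q - 1) * m - i) M1 ->
     is_largest_leader_of_weight q m ((q - 1) * m - i.+1) M2 ->
     M1 > M2).
Proof.
move=> [p [k [pp _ k0 Hq]]] hm.
have hq : 1 < q.
  rewrite Hq.
  have : p <= p ^ k by rewrite -{1}(expn1 p) leq_pexp2l // prime_gt0.
  have := prime_gt1 pp; lia.
clear Hq.
have hqm : m <= (q - 1) * m by rewrite leq_pmull; lia.
split.
- move=> i hi.
  suff H : forall w, w <= (q - 1) * m - 1 -> exists S, is_coset_leader q m S /\ wq q m S = w.
    by apply: H; lia.
  elim=> [|w IH] hw.
    exists 0; split.
      split => [|j]; last by rewrite mul0n mod0n.
      have : q ^ 2 <= q ^ m by rewrite leq_exp2l.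
      have : 2 * 2 <= q * q by rewrite leq_mul.
      rewrite expnS expn1; lia.
    by rewrite /wq big1 // => j _; rewrite div0n mod0n.
  have [S [hS hSw]] := IH (ltac:(lia)).
  have [s' [h1 h2 _]] := incr q m S hq hm hS (ltac:(lia)).
  by exists s'; split => //; rewrite h2 hSw addn1.
- move=> i M1 M2 hi [hl1 hw1 hmax1] [hl2 hw2 hmax2].
  have [s' [h1 h2 h3]] := incr q m M2 hq hm hl2 (ltac:(lia)).
  apply: leq_trans h3 _; apply: hmax1 => //; lia.
Qed.
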